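(* Let $(M,\mathcal F)$ be transversely Hessian with foliated Hessian structure $(D,g)$ and second normal Koszul form $\beta$. For any adapted foliated affine coordinate system $(x^1,\dots,x^p,y^1,\dots,y^q)$, let $\mathbf R^N_{i\bar j}$ ($i,j=1,\dots,q$) be the components of the normal Ricci tensor of the normal Kählerian metric $g^N$ of the foliated manifold $(N(M,\mathcal F),\mathcal F^N)$ with respect to the complex coordinates $z^i,\bar z^j$. Then $\mathbf R^N_{i\bar j}=-\frac12\beta_{ij}\circ\pi$, where $\pi:N(M,\mathcal F)\to M$ is the projection.
   Context: $N(M,\mathcal F)=TM/T\mathcal F$, $\mathcal F$ of codimension $q$. $(D,g)$: $D$ a flat torsion-free foliated connection in the normal bundle (adapted foliated affine coordinates: adapted charts with affine transverse coordinate changes and $\overline{\partial/\partial y^i}$ $D$-parallel), $g$ a foliated metric in the normal bundle with locally $g_{ij}=\partial^2h/\partial y^i\partial y^j$, $h$ a function of $y$ only. Normal volume form $\omega=(\det g_{kl})^{1/2}dy^1\wedge\dots\wedge dy^q$; first Koszul form $\alpha$: $D_X\omega=\alpha(X)\omega$; second Koszul form $\beta=D\alpha$, $\beta_{ij}=\partial\alpha_i/\partial y^j$. On $N(M,\mathcal F)$ with fibre coordinates $\xi^i=dy^i$, $\mathcal F^N$ has plaques $\{(y,\xi)=\mathrm{const}\}$, $z^i=y^i+\sqrt{-1}\xi^i$ are transversely holomorphic coordinates and $g^N=\sum(g_{ij}\circ\pi)dz^id\bar z^j$ is a foliated Kähler metric; its normal Ricci tensor is the Ricci tensor of the corresponding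 transverse Kähler metric. *)

(* Defs.v *)
From mathcomp Require Import all_boot all_algebra.
From mathcomp Require Import all_classical all_reals all_analysis.
From mathcomp Require Import complex.
Set Implicit Arguments. Unset Strict Implicit. Unset Printing Implicit Defensive.
Import GRing.Theory Num.Theory.
Local Open Scope ring_scope.
Local Open Scope complex_scope.

(* Local (chart-level) setting: transverse affine coordinates y = (y^1..y^q)
   ranging over an open set U of R^q; fibre coordinates xi = (xi^1..xi^q) of
   the normal bundle; complex coordinates z^i = y^i + sqrt(-1) xi^i. *)

Definition Rq (R : realType) (q : nat) : normedModType R := 'rV[R]_q.

Definition ev {R : realType} {q : nat} (k : 'I_q) : Rq R q :=
  \row_(l < q) (l == k)%:R.

Definition pd {R : realType} {q : nat} (k : 'I_q) (f : Rq R q -> R) : Rq R q -> R :=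
  fun y => 'D_(ev k) f y.

Fixpoint iterD {R : realType} {q : nat} (vs : seq (Rq R q)) (f : Rq R q -> R)
  : Rq R q -> R :=
  match vs with
  | [::] => f
  | v :: vs' => fun y => 'D_v (iterD vs' f) y
  end.

Definition smooth_on {R : realType} {q : nat} (U : set (Rq R q)) (f : Rq R q -> R) :=
  forall (vs : seq (Rq R q)) (y : Rq R q), U y -> differentiable (iterD vs f) y.

Definition posdef {R : realType} {q : nat} (G : 'M[R]_q) :=
  G^T = G /\ forall v : 'rV[R]_q, v != 0 -> 0 < (v *m G *m v^T) 0 0.

Definition hess_metric {R : realType} {q : nat} (h : Rq R q -> R) (y : Rq R q)
  : 'M[R]_q := \matrix_(i, j) pd j (pd i h) y.

(* normal volume form omega = (det g)^{1/2} dy^1 /\ ... /\ dy^q : its density *)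
Definition normal_volume_density {R : realType} {q : nat} (h : Rq R q -> R)
  (y : Rq R q) : R := Num.sqrt (\det (hess_metric h y)).

(* first Koszul form alpha, D_X omega = alpha(X) omega.  Since the coordinate
   fields are D-parallel (D flat in affine coordinates),
   D_{d/dy^i} (rho dy^1/\../\dy^q) = (d rho/dy^i) dy^1/\../\dy^q, so
   alpha_i is determined by alpha_i * rho = d rho / dy^i. *)
Definition first_koszul {R : realType} {q : nat} (h : Rq R q -> R)
  (y : Rq R q) (i : 'I_q) : R :=
  pd i (normal_volume_density h) y / normal_volume_density h y.

(* second Koszul form beta = D alpha, beta_ij = d alpha_i / d y^j *)
Definition second_koszul {R : realType} {q : nat} (h : Rq R q -> R)
  (y : Rq R q) (i j : 'I_q) : R :=
  pd j (fun y' => first_koszul h y' i) y.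

Definition pdy {R : realType} {q : nat} (k : 'I_q) (F : Rq R q -> Rq R q -> R)
  : Rq R q -> Rq R q -> R := fun y xi => pd k (fun y' => F y' xi) y.
Definition pdxi {R : realType} {q : nat} (k : 'I_q) (F : Rq R q -> Rq R q -> R)
  : Rq R q -> Rq R q -> R := fun y xi => pd k (fun xi' => F y xi') xi.

(* d^2 F / dz^i d zbar^j for a real-valued F(y, xi), with
   d/dz^i = (d/dy^i - sqrt(-1) d/dxi^i)/2, d/dzbar^j = (d/dy^j + sqrt(-1) d/dxi^j)/2:
   d/dz^i (d/dzbar^j F)
     = 1/4 [ F_{y^j y^i} + F_{xi^j xi^i} + sqrt(-1) (F_{xi^j y^i} - F_{y^j xi^i}) ]
   (F_{a b} meaning d/db (d/da F)). *)
Definition dz_dzbar {R : realType} {q : nat} (i j : 'I_q)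
  (F : Rq R q -> Rq R q -> R) (y xi : Rq R q) : R[i] :=
  (4^-1)%:C *
  ((pdy i (pdy j F) y xi + pdxi i (pdxi j F) y xi)%:C
   + 'i%C * (pdy i (pdxi j F) y xi - pdxi i (pdy j F) y xi)%:C).

(* Ricci tensor of a Kaehler metric with components G_{k lbar}(z):
   R_{i jbar} = - d^2 log det (G_{k lbar}) / dz^i dzbar^j.
   (det of the Hermitian matrix G is real; we take the log of its real part.) *)
Definition kahler_ricci {R : realType} {q : nat}
  (G : Rq R q -> Rq R q -> 'M[R[i]]_q) (i j : 'I_q) (y xi : Rq R q) : R[i] :=
  - dz_dzbar i j (fun y' xi' => ln (complex.Re (\det (G y' xi')))) y xi.

(* normal Kaehler metric g^N = sum (g_ij o pi) dz^i dzbar^j on N(M,F),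
   in the coordinates (y, xi); pi (y, xi) = y. *)
Definition normal_kahler_metric {R : realType} {q : nat} (h : Rq R q -> R)
  (y xi : Rq R q) : 'M[R[i]]_q :=
  \matrix_(k, l) ((hess_metric h y) k l)%:C.

(* Main.v *)
Require Import Defs.
From mathcomp Require Import all_boot all_algebra.
From mathcomp Require Import all_classical all_reals all_analysis.
From mathcomp Require Import complex.
From mathcomp Require Import ring lra.
From mathcomp Require Import perm.
Import order.Order.TTheory GRing.Theory Num.Theory.

Section Loc.
Local Open Scope ring_scope.
Local Open Scope classical_set_scope.
Context {R : realType} {V W : normedModType R}.

Lemma near_eq_differentiable (f g : V -> W) (x : V) :
  (\forall y \near x, f y = g y) -> differentiable f x -> differentiable g x.
Proof.
move=> fg df.
have gx : f x = g x by exact: (nbhs_singleton fg).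
have L : forall eps : R, 0 < eps -> \forall h \near (0:V), `|(g \o shift x - (cst (g x) + 'd f x)) h| <= eps * `|id h|.
  have := diff_locally df => /eqaddoP Hf.
  move=> _ /posnumP[e].
  have Hfe := Hf _ (gt0 e).
  have fg0 : \forall h \near (0:V), f (h + x) = g (h + x).
    rewrite (near_shift x) /=. near=> y. rewrite /= sub0r subrK. near: y; exact fg.
  near=> h.
  have -> : (g \o shift x - (cst (g x) + 'd f x)) h
          = (f \o shift x - (cst (f x) + 'd f x)) h.
    rewrite /= gx -[LHS]/(g (h+x) - (g x + 'd f x h)) -[RHS]/(f (h+x) - (g x + 'd f x h)).
    by rewrite (near fg0 h).
  near: h; exact: Hfe.
have E : 'd g x = 'd f x :> (V -> W).
  apply: diff_unique; first exact: diff_continuous.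
  exact/eqaddoP.
apply/diff_locallyP; rewrite E; split; first exact: diff_continuous.
exact/eqaddoP.
Unshelve. all: by end_near. Qed.

End Loc.

Section Sch.
Local Open Scope ring_scope.
Local Open Scope classical_set_scope.
Context {R : realType} {V : normedModType R}.

Lemma line_is_derive (f : V -> R) (u w : V) (s : R) :
  derivable f (s *: u + w) u ->
  is_derive s 1 (fun r : R => f (r *: u + w)) ('D_u f (s *: u + w)).
Proof.
move=> df.
have E : (fun h : R => h^-1 *: (((fun r : R => f (r *: u + w)) \o shift s) (h *: (1:R))
            - f (s *: u + w)))
       = (fun h : R => h^-1 *: ((f \o shift (s *: u + w)) (h *: u) - f (s *: u + w))).
  by apply/funext => h /=; rewrite [h *: (1:R)]mulr1 scalerDl addrA.
by split; rewrite /derivable /derive E.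
Qed.

Lemma young_half (f : V -> R) (y u v : V) (e d t : R) :
  0 < e -> 0 < t -> t * (`|u| + `|v|) < d ->
  (forall h, `|h| < d -> derivable f (y + h) u) ->
  (forall h, `|h| < d ->
     `|'D_u f (y + h) - ('D_u f y + 'd ('D_u f) y h)| <= e * `|h|) ->
  `|(f (t *: u + (y + t *: v)) - f (t *: u + y)) - (f (y + t *: v) - f y)
      - t * (t * 'd ('D_u f) y v)| <= t * (e * (t * (`|u| + `|v|)) + e * (t * (`|u| + `|v|))).
Proof.
move=> e0 t0 td Hd Hl.
set phi := fun s : R => f (s *: u + (y + t *: v)) - f (s *: u + y).
set dphi := fun s : R => 'D_u f (s *: u + (y + t *: v)) - 'D_u f (s *: u + y).
have nb0 : forall s, 0 <= s <= t ->
    `|s *: u + t *: v| <= t * (`|u| + `|v|) /\ `|s *: u| <= t * (`|u| + `|v|).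
  move=> s /andP[s0 st].
  have h1 : `|s *: u| <= t * `|u|.
    by rewrite normrZ ger0_norm // ler_wpM2r.
  have h2 : `|t *: v| <= t * `|v| by rewrite normrZ ger0_norm // ltW.
  split.
    by apply: (le_trans (ler_normD _ _)); rewrite mulrDr lerD.
  by apply: (le_trans h1); rewrite mulrDr lerDl mulr_ge0 // ltW.
have nb : forall s, 0 <= s <= t -> `|s *: u + t *: v| < d /\ `|s *: u| < d.
  by move=> s st; have [n1 n2] := nb0 s st; split; apply: (le_lt_trans _ td).
have der : forall s, 0 <= s <= t -> is_derive s 1 phi (dphi s).
  move=> s st; have [n1 n2] := nb s st.
  apply: is_deriveB; apply: line_is_derive.
    by rewrite addrCA; apply: Hd.
  by rewrite addrC; apply: Hd.
have [c cin E] : exists2 c, c \in `]0, t[%R & phi t - phi 0 = dphi c * (t - 0).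
  apply: (@MVT R phi dphi 0 t) => //.
    by move=> x; rewrite in_itv /= => /andP[x0 xt]; apply: der; rewrite !ltW.
  apply: derivable_within_continuous => x; rewrite in_itv /= => xt.
  by have := der x xt => -[].
move: cin; rewrite in_itv /= => /andP[c0 ct].
have cc : 0 <= c <= t by rewrite !ltW.
have [n1 n2] := nb c cc.
have [m1 m2] := nb0 c cc.
have -> : f (t *: u + (y + t *: v)) - f (t *: u + y) - (f (y + t *: v) - f y)
   = phi t - phi 0 by rewrite /phi !scale0r !add0r.
rewrite E subr0 mulrC -mulrBr normrM (ger0_norm (ltW t0)).
apply: ler_wpM2l; first exact: ltW.
set L := 'd ('D_u f) y.
have key : dphi c - t * L v
   = ('D_u f (y + (c *: u + t *: v)) - ('D_u f y + L (c *: u + t *: v)))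
     - ('D_u f (y + c *: u) - ('D_u f y + L (c *: u))).
  have Ls : L (c *: u + t *: v) = L (c *: u) + t * L v.
    rewrite raddfD; congr (_ + _); exact: linearZZ.
  rewrite /dphi addrCA [c *: u + y]addrC Ls.
  ring.
rewrite key; apply: (le_trans (ler_normB _ _)); apply: lerD.
  by apply: (le_trans (Hl _ n1)); apply: ler_wpM2l => //; exact: ltW.
by apply: (le_trans (Hl _ n2)); apply: ler_wpM2l => //; exact: ltW.
Qed.


Lemma alg_close (A B K : R) : 0 <= K ->
  (forall e, 0 < e -> `|A - B| <= e * (4 * K)) -> A = B.
Proof.
move=> K0 Hb.
apply/eqP; rewrite -subr_eq0 -normr_le0; apply/ler_addgt0Pr => e e0.
rewrite add0r.
have k0 : 0 < 4 * K + 1 by rewrite ltr_wpDl // mulr_ge0.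
apply: (le_trans (Hb (e / (4 * K + 1)) (divr_gt0 e0 k0))).
rewrite mulrAC ler_pdivrMr //.
by apply: ler_wpM2l; [exact: ltW | rewrite lerDl].
Qed.

Lemma alg_tri (a a' A B t M : R) : a' = a -> 0 < t ->
  `|a - t * (t * A)| <= t * M -> `|a' - t * (t * B)| <= t * M ->
  t * (t * `|A - B|) <= t * M + t * M.
Proof.
move=> -> t0 H1 H2.
have -> : t * (t * `|A - B|) = `|(a - t * (t * B)) - (a - t * (t * A))|.
  have -> : (a - t * (t * B)) - (a - t * (t * A)) = t * (t * (A - B)) by ring.
  by rewrite !normrM (ger0_norm (ltW t0)).
by apply: (le_trans (ler_normB _ _)); rewrite addrC lerD.
Qed.

Lemma t_choice (d K : R) : 0 < d -> 0 <= K ->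
  exists2 t, 0 < t & t * K < d.
Proof.
move=> d0 K0.
have K1 : K + 1 != 0 by rewrite gt_eqF // ltr_wpDl.
exists (d / (K + 1) / 2); first by rewrite !divr_gt0 // ltr_wpDl.
have E1 : d / (K + 1) / 2 * (K + 1) = d / 2 by field.
apply: (le_lt_trans (y := d / (K + 1) / 2 * (K + 1))).
  by apply: ler_wpM2l; [rewrite !divr_ge0 // ?ltW // ltr_wpDl | rewrite lerDl].
by rewrite E1 ltr_pdivrMr // ltr_pMr // ltr1n.
Qed.

Lemma schwarz (f : V -> R) (y u v : V) :
  (\forall z \near y, derivable f z u) -> (\forall z \near y, derivable f z v) ->
  differentiable ('D_u f) y -> differentiable ('D_v f) y ->
  'D_v ('D_u f) y = 'D_u ('D_v f) y.
Proof.
move=> Du Dv d1 d2.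
rewrite (deriveE _ d1) (deriveE _ d2).
apply: (@alg_close _ _ (`|u| + `|v|)); first by rewrite addr_ge0.
move=> e e0.
have N1 := (nbhs0P _ _).1 Du.
have N2 := (nbhs0P _ _).1 Dv.
have L1 := (eqaddoP _ _ _ _).1 (diff_locally d1) e e0.
have L2 := (eqaddoP _ _ _ _).1 (diff_locally d2) e e0.
have L1' : \forall h \near (0:V),
   `|'D_u f (y + h) - ('D_u f y + 'd ('D_u f) y h)| <= e * `|h|.
  apply: filterS L1 => h; rewrite [y + h]addrC; exact.
have L2' : \forall h \near (0:V),
   `|'D_v f (y + h) - ('D_v f y + 'd ('D_v f) y h)| <= e * `|h|.
  apply: filterS L2 => h; rewrite [y + h]addrC; exact.
have : \forall h \near (0:V), [/\ derivable f (y + h) u, derivable f (y + h) v,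
   `|'D_u f (y + h) - ('D_u f y + 'd ('D_u f) y h)| <= e * `|h| &
   `|'D_v f (y + h) - ('D_v f y + 'd ('D_v f) y h)| <= e * `|h|].
  by apply: filterS (filterI (filterI N1 N2) (filterI L1' L2')) => h [[a b] [c d]].
move=> /nbhs_norm0P [d /= d0 Pd].
have [t t0 tK] := @t_choice d (`|u| + `|v|) d0 (addr_ge0 (normr_ge0 _) (normr_ge0 _)).
have H1 := @young_half f y u v e d t e0 t0 tK
  (fun h hd => let: And4 x _ _ _ := Pd h hd in x)
  (fun h hd => let: And4 _ _ x _ := Pd h hd in x).
have tK' : t * (`|v| + `|u|) < d by rewrite addrC.
have H2 := @young_half f y v u e d t e0 t0 tK'
  (fun h hd => let: And4 _ x _ _ := Pd h hd in x)
  (fun h hd => let: And4 _ _ _ x := Pd h hd in x).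
rewrite [`|v| + `|u|]addrC in H2.
have E2 : f (t *: v + (y + t *: u)) = f (t *: u + (y + t *: v)).
  by rewrite (addrCA (t *: v)) (addrCA (t *: u)) (addrC (t *: v) (t *: u)).
rewrite E2 [t *: v + y]addrC in H2.
rewrite [t *: u + y]addrC in H1.
have Ea : forall a b c w : R, a - b - (c - w) = a - c - (b - w).
  by move=> a b c w; ring.
rewrite Ea in H2.
have H4 := alg_tri _ _ _ _ _ _ (erefl _) t0 H1 H2.
have : t * (t * `|'d ('D_u f) y v - 'd ('D_v f) y u|)
       <= t * (t * (e * (4 * (`|u| + `|v|)))).
  apply: (le_trans H4); rewrite le_eqVlt; apply/orP; left; apply/eqP; ring.
by rewrite !ler_pM2l.
Unshelve. all: by end_near. Qed.

End Sch.
Section PD.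
Local Open Scope ring_scope.
Local Open Scope classical_set_scope.
Lemma rowv_sq_gt0 (R : realType) n (v : 'rV[R]_n) : v != 0 -> 0 < (v *m v^T) 0 0.
Proof.
move=> vn0; rewrite !mxE.
have [k vk] : exists k, v 0 k != 0.
  apply/existsP; apply: contraR vn0 => /existsPn H.
  apply/eqP/matrixP => a b; rewrite ord1 mxE; exact/eqP/negbNE/H.
rewrite (bigD1 k) //= ltr_pwDl //.
  by rewrite mxE -expr2 exprn_even_gt0 // vk orbT.
by apply: sumr_ge0 => a _; rewrite mxE -expr2 sqr_ge0.
Qed.

Lemma posdef_det_gt0 (R : realType) n (G : 'M[R]_n) :
  (forall v : 'rV[R]_n, v != 0 -> 0 < (v *m G *m v^T) 0 0) -> 0 < \det G.
Proof.
move=> pd.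
pose P : 'M[{poly R}]_n := 'X *: (1%:M - map_mx polyC G) + map_mx polyC G.
pose ft := horner (\det P).
have Eft : forall t, ft t = \det (t *: (1%:M - G) + G).
  move=> t; rewrite /ft -horner_evalE -det_map_mx; congr (\det _).
  apply/matrixP => a b; rewrite !mxE /= horner_evalE !hornerE; by case: (a == b); rewrite ?hornerE.
have nz : forall c, 0 <= c <= 1 -> ft c != 0.
  move=> c /andP[c0 c1]; rewrite Eft; apply/negP => /det0P [w wn0 wM].
  have : 0 < (w *m (c *: (1%:M - G) + G) *m w^T) 0 0.
    have -> : c *: (1%:M - G) + G = c *: 1%:M + (1 - c) *: G.
      by apply/matrixP => a b; rewrite !mxE; ring.
    rewrite mulmxDr -!scalemxAr mulmxDl -!scalemxAl mulmx1.
    have h1 := rowv_sq_gt0 _ _ _ wn0; have h2 := pd _ wn0.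
    move: h1 h2; set a := w *m w^T; set b := w *m G *m w^T => h1 h2.
    rewrite mxE [(c *: a) 0 0]mxE [((1 - c) *: b) 0 0]mxE.
    case: (c =P 0) => [->|cn0]; first by rewrite mul0r add0r subr0 mul1r.
    have p2 : 0 <= (1 - c) * b 0 0 by apply: mulr_ge0; [rewrite subr_ge0 | exact: ltW].
    have p1 : 0 < c * a 0 0.
      by apply: mulr_gt0 => //; rewrite lt_neqAle eq_sym; apply/andP; split => //; apply/eqP.
    by apply: (lt_le_trans p1); rewrite lerDl.
  by rewrite wM mul0mx mxE ltxx.
have f1 : ft 1 = 1 by rewrite Eft scale1r subrK det1.
have f0 : ft 0 = \det G by rewrite Eft scale0r add0r.
rewrite -f0; case: (ltrP 0 (ft 0)) => // f0le.
have cont : {within `[0, 1], continuous ft}.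
  by apply: continuous_subspaceT => x; apply: continuous_horner.
have hv : Num.min (ft 0) (ft 1) <= 0 <= Num.max (ft 0) (ft 1).
  by rewrite f1 ge_min f0le /= le_max ler01 orbT.
have [c cin fc] := @IVT R ft 0 1 0 ler01 cont hv.
move: cin; rewrite in_itv /= => cin.
by have := nz c cin; rewrite fc eqxx.
Qed.

End PD.

Section C1sec.
Local Open Scope ring_scope.
Local Open Scope classical_set_scope.
Context {R : realType} {V : normedModType R} (U : set V) (oU : open U).

Definition C1 (f : V -> R) :=
  forall z, U z -> differentiable f z /\ forall w, differentiable ('D_w f) z.

Lemma nearU z : U z -> \forall x \near z, U x.
Proof. by move=> Uz; apply: open_nbhs_nbhs; split. Qed.

Lemma C1_cst (k : R) : C1 (fun _ => k).
Proof.
move=> z Uz; split; first exact: differentiable_cst.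
move=> w; have -> : 'D_w (fun _ : V => k) = fun _ => 0.
  by apply/funext => x; exact: (derive_cst k x w).
exact: differentiable_cst.
Qed.

Lemma C1_add f g : C1 f -> C1 g -> C1 (fun z => f z + g z).
Proof.
move=> Cf Cg z Uz; have [df dDf] := Cf z Uz; have [dg dDg] := Cg z Uz.
split; first exact: differentiableD.
move=> w; apply: (@near_eq_differentiable _ _ _ (fun x => 'D_w f x + 'D_w g x)).
  near=> x.
  have Ux : U x by near: x; apply: nearU.
  have [dfx _] := Cf x Ux; have [dgx _] := Cg x Ux.
  by rewrite -(deriveD (diff_derivable (v:=w) dfx) (diff_derivable (v:=w) dgx)).
exact: differentiableD.
Unshelve. all: by end_near. Qed.

Lemma C1_mul f g : C1 f -> C1 g -> C1 (fun z => f z * g z).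
Proof.
move=> Cf Cg z Uz; have [df dDf] := Cf z Uz; have [dg dDg] := Cg z Uz.
split; first exact: differentiableM.
move=> w; apply: (@near_eq_differentiable _ _ _
   (fun x => f x * 'D_w g x + g x * 'D_w f x)).
  near=> x.
  have Ux : U x by near: x; apply: nearU.
  have [dfx _] := Cf x Ux; have [dgx _] := Cg x Ux.
  by rewrite -(deriveM (diff_derivable (v:=w) dfx) (diff_derivable (v:=w) dgx)).
by apply: differentiableD; apply: differentiableM.
Unshelve. all: by end_near. Qed.

Lemma C1_sum (I : Type) (r : seq I) (F : I -> V -> R) :
  (forall i, C1 (F i)) -> C1 (fun z => \sum_(i <- r) F i z).
Proof.
move=> CF; elim: r => [|a r IH].
  by apply: (@eq_ind _ (fun _ => 0)); [exact: C1_cst | apply/funext => z; rewrite big_nil].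
apply: (@eq_ind _ (fun z => F a z + \sum_(i <- r) F i z)).
  exact: C1_add.
by apply/funext => z; rewrite big_cons.
Qed.

Lemma C1_prod (I : Type) (r : seq I) (F : I -> V -> R) :
  (forall i, C1 (F i)) -> C1 (fun z => \prod_(i <- r) F i z).
Proof.
move=> CF; elim: r => [|a r IH].
  by apply: (@eq_ind _ (fun _ => 1)); [exact: C1_cst | apply/funext => z; rewrite big_nil].
apply: (@eq_ind _ (fun z => F a z * \prod_(i <- r) F i z)).
  exact: C1_mul.
by apply/funext => z; rewrite big_cons.
Qed.

End C1sec.

Local Open Scope ring_scope.
Local Open Scope complex_scope.

Lemma derive_comp_R {R : realType} {V : normedModType R} (f : V -> R)
  (phi : R -> R) (z w : V) (dphi : R) :
  differentiable f z -> is_derive (f z) 1 phi dphi ->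
  'D_w (fun x => phi (f x)) z = 'D_w f z * dphi /\
  differentiable (fun x => phi (f x)) z.
Proof.
move=> df dp.
have dpd := iffLR (derivable1_diffP phi (f z)) (@ex_derive _ _ _ _ _ _ _ dp).
have dc : differentiable (phi \o f) z := differentiable_comp df dpd.
split=> //.
rewrite (deriveE _ dc) diff_comp // (deriveE _ df) /= diff1E // derive1E.
by rewrite derive_val.
Qed.

Lemma pd_cst {R : realType} {q : nat} (k : 'I_q) (c : R) (x : Rq R q) :
  pd k (fun _ => c) x = 0.
Proof. exact: (derive_cst c x (ev k)). Qed.

Theorem proposition9 (R : realType) (q : nat) (U : set (Rq R q))
  (h : Rq R q -> R) :
  open U ->
  smooth_on U h ->
  (forall y, U y -> posdef (hess_metric h y)) ->
  forall (y xi : Rq R q) (i j : 'I_q), U y ->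
    kahler_ricci (normal_kahler_metric h) i j y xi
    = (- (1 / 2) * second_koszul h y i j)%:C.
Proof.
move=> oU hs hp y xi i j Uy.
pose D : Rq R q -> R := fun z => \det (hess_metric h z).
have Cg : forall k l, C1 U (fun z => hess_metric h z k l).
  move=> k l.
  have -> : (fun z => hess_metric h z k l) = Defs.iterD [:: ev l; ev k] h.
    by apply/funext => z; rewrite /hess_metric mxE.
  by move=> z Uz; split; [exact: (hs [:: ev l; ev k]) | move=> w; exact: (hs [:: w; ev l; ev k])].
have CD : C1 U D.
  rewrite /D; unfold determinant.
  apply: (@C1_sum _ _ U oU _ _ (fun (s : 'S_q) z => (-1) ^+ s * \prod_(k < q) hess_metric h z k (s k))).
  move=> s; apply: (@C1_mul _ _ U oU); first exact: C1_cst.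
  by apply: (@C1_prod _ _ U oU _ _ (fun (k : 'I_q) z => hess_metric h z k (s k))) => k; exact: Cg.
have Dpos : forall z, U z -> 0 < D z.
  by move=> z Uz; apply: posdef_det_gt0; exact: (hp z Uz).2.
have dD : forall z, U z -> differentiable D z by move=> z Uz; exact: (CD z Uz).1.
pose L : Rq R q -> R := fun z => ln (D z).
have dL : forall z w, U z -> 'D_w L z = 'D_w D z * (D z)^-1 /\ differentiable L z.
  move=> z w Uz; apply: derive_comp_R; first exact: dD.
  exact: (@is_derive1_ln R (D z) (Dpos z Uz)).
have rhoE : forall z w, U z -> 'D_w (normal_volume_density h) z
    = 'D_w D z * (2 * Num.sqrt (D z))^-1.
  move=> z w Uz; have -> : normal_volume_density h = (fun x => Num.sqrt (D x)) by [].
  by have [-> _] := derive_comp_R D Num.sqrt z w _ (dD z Uz) (@is_derive1_sqrt _ (D z) (Dpos z Uz)).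
have alphaE : forall z, U z -> first_koszul h z i = 2^-1 * pd i L z.
  move=> z Uz; rewrite /first_koszul /pd rhoE // (dL z (ev i) Uz).1.
  rewrite /normal_volume_density -/(D z).
  have s0 : Num.sqrt (D z) != 0 by rewrite gt_eqF // sqrtr_gt0 Dpos.
  rewrite -{3}(sqr_sqrtr (ltW (Dpos z Uz))).
  by field.
have nU := @nearU _ _ U oU y Uy.
have Dy0 : D y != 0 by rewrite gt_eqF // Dpos.
have dDL : forall k, differentiable (pd k L) y.
  move=> k.
  apply: (@near_eq_differentiable _ _ _ (fun z => 'D_(ev k) D z * (D z)^-1)).
    near=> z; have Uz : U z by near: z.
    by rewrite /pd (dL z (ev k) Uz).1.
  apply: differentiableM; first exact: (CD y Uy).2.
  exact: differentiableV (dD y Uy) Dy0.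
have sch : pd j (pd i L) y = pd i (pd j L) y.
  apply: schwarz; [| | exact: dDL | exact: dDL].
    near=> z; have Uz : U z by near: z.
    exact: diff_derivable (dL z (ev i) Uz).2.
  near=> z; have Uz : U z by near: z.
  exact: diff_derivable (dL z (ev j) Uz).2.
have beta : second_koszul h y i j = 2^-1 * pd j (pd i L) y.
  rewrite /second_koszul.
  transitivity (pd j (fun z => 2^-1 *: pd i L z) y).
    apply: near_eq_derive; near=> z; have Uz : U z by near: z.
    by rewrite alphaE.
  exact: deriveZ (diff_derivable (dDL i)).
have EF : (fun y' xi' : Rq R q => ln (complex.Re (\det (normal_kahler_metric h y' xi'))))
        = (fun y' _ => L y').
  apply/funext => y'; apply/funext => xi'.
  have -> : normal_kahler_metric h y' xi' = map_mx (real_complex R) (hess_metric h y').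
    by apply/matrixP => a b; rewrite !mxE.
  by rewrite det_map_mx.
rewrite /kahler_ricci EF beta /dz_dzbar /pdy /pdxi /=.
have W1 : pd i (fun x => pd j (fun _ : Rq R q => L y) x) xi = 0.
  transitivity (pd i (fun _ : Rq R q => (0:R)) xi); last exact: pd_cst.
  by congr (pd i _ xi); apply/funext => x; exact: pd_cst.
have W2 : pd i (fun y' : Rq R q => pd j (fun _ : Rq R q => L y') xi) y = 0.
  transitivity (pd i (fun _ : Rq R q => (0:R)) y); last exact: pd_cst.
  by congr (pd i _ y); apply/funext => x; exact: pd_cst.
have W3 : pd i (fun _ : Rq R q => pd j L y) xi = 0 by exact: pd_cst.
transitivity (- ((4^-1)%:C * ((pd i (pd j L) y + 0)%:C + 'i%C * (0 - 0)%:C))).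
  congr (- (_ * ((_ + _)%:C + _ * (_ - _)%:C))).
  - exact: W1.
  - exact: W2.
  - exact: W3.
rewrite sch addr0 subrr rmorph0 mulr0 addr0 -rmorphM -rmorphN; congr (_%:C).
by field.
Unshelve. all: by end_near. Qed.
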